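(* If $p$ is prime, then $\operatorname{sf}(p-1)\equiv (p-1)!! \pmod p$.
   Context: For a natural number $n$, the double factorial $n!!$ is the product of the natural numbers less than or equal to $n$ that have the same parity as $n$. The superfactorial is $\operatorname{sf}(n)=\prod_{k=1}^{n} k!$. *)

(* Defs.v *)
From mathcomp Require Import all_boot.

Fixpoint dfact (n : nat) : nat :=
  match n with
  | 0 => 1
  | 1 => 1
  | (m.+2) as k => k * dfact m
  end.

Definition superfact (n : nat) : nat := \prod_(1 <= k < n.+1) k`!.

(* Main.v *)
Require Import Defs.
From mathcomp Require Import all_boot.
From mathcomp Require Import all_algebra.
From mathcomp Require Import zify ring.
Import GRing.Theory.

Lemma sf_split r : superfact r.*2 =
  (\prod_(i < r) (i.*2.+1)`!) ^ 2 * dfact r.*2.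
Proof.
elim: r => [|r IH]; first by rewrite /superfact big_ord0 big_geq.
rewrite doubleS /superfact big_nat_recr //= big_nat_recr //=.
rewrite -/(superfact r.*2) IH big_ord_recr /= -doubleS.
rewrite [(r.*2.+2)`!]factS -/(r.*2.+1)`!.
set A := \prod_(i < r) _. set B := (r.*2.+1)`!. set D := dfact _.
rewrite doubleS expnMn !expnS !expn0 !muln1.
set c := r.*2.+2.
clearbody A B D c.
rewrite -!mulnA [D * _]mulnCA [D * (c * B)]mulnCA [c * (D * B)]mulnC [B * (c * D)]mulnC.
congr (_ * (_ * (_ * _))); by rewrite mulnC mulnA.
Qed.


Section Fp.
Variable p : nat.
Hypothesis pp : prime p.
Local Open Scope ring_scope.

Lemma f_alt k : (k <= p.-1)%N ->
  ((k`! * (p.-1 - k)`!)%:R : 'F_p) = (-1) ^+ k.+1.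
Proof.
have p1 : (1 < p)%N := prime_gt1 pp.
elim: k => [|k IH] Hk.
  rewrite fact0 mul1n subn0 expr1.
  have W : (p %| (p.-1)`!.+1)%N by rewrite -Wilson.
  have : ((p.-1)`!.+1%:R : 'F_p) = 0.
    by rewrite -(Fp_nat_mod pp) (eqP W).
  by rewrite -natr1 => /eqP; rewrite addr_eq0 => /eqP.
have IH' := IH (ltnW Hk).
set c := (p.-1 - k)%N.
have cpos : (0 < c)%N by rewrite subn_gt0.
have Hc : c = (p.-1 - k.+1).+1 by rewrite /c subnSK.
have cnz : (c%:R : 'F_p) != 0.
  have cltp : (c < p)%N.
    by rewrite /c; move: p1; case: (p) => // q _; rewrite /= ltnS leq_subr.
  rewrite -unitfE (unitFpE pp) prime_coprime //; apply/negP => /(dvdn_leq cpos).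
  by rewrite leqNgt cltp.
have Hsum : ((k.+1)%:R : 'F_p) = - c%:R.
  apply/eqP; rewrite -addr_eq0 -natrD.
  have -> : (k.+1 + c = p)%N.
    by rewrite /c; lia.
  by rewrite pchar_Fp_0.
apply: (mulIf cnz).
have E : ((k.+1)`! * (p.-1 - k.+1)`! * c = (k`! * c`!) * k.+1)%N.
  by rewrite factS {2}Hc factS; rewrite -Hc; ring.
rewrite -natrM E natrM IH' Hsum.
by rewrite !exprS -mulNrn; ring.
Qed.

End Fp.

Lemma natFp_mod p x y : prime p -> ((x%:R : 'F_p) = y%:R)%R -> x = y %[mod p].
Proof.
move=> pp H; have := congr1 (@nat_of_ord _) H.
by rewrite !(val_Fp_nat pp).
Qed.

Theorem theorem5 (p : nat) : prime p ->
  superfact p.-1 = dfact p.-1 %[mod p].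
Proof.
move=> pp.
have p1 : 1 < p := prime_gt1 pp.
case: (boolP (odd p)) => op; last first.
  have p2 : p = 2 by case: (even_prime pp) => // H; rewrite H in op.
  by rewrite p2 /superfact big_nat1.
set r := p./2.
have Hr : p.-1 = r.*2 by rewrite -(odd_double_half p) op.
rewrite Hr sf_split.
suff HB : (\prod_(i < r) (i.*2.+1)`!) ^ 2 = 1 %[mod p].
  by rewrite -modnMml HB modnMml mul1n.
apply: natFp_mod => //.
rewrite expnS expn1.
rewrite [X in (_ * X)%N](reindex_inj rev_ord_inj) /=.
rewrite -big_split /= natr_prod.
apply: big1 => i _.
have -> : (r - i.+1).*2.+1 = (p.-1 - i.*2.+1)%N.
  rewrite Hr; have := ltn_ord i; lia.
rewrite f_alt //.
  rewrite -doubleS -mul2n exprM.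
  by rewrite sqrrN expr1n expr1n.
have := ltn_ord i; lia.
Qed.
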